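(* Let $L$ be a real $n\times n$ matrix with nonpositive off-diagonal entries and nonnegative row sums (i.e. $\sum_{j}L_{ij}\ge 0$ for every $i$). If $f\in\mathbb{Z}^n$ with $f\ge 0$ is $\chi$-superstable with respect to $L$, then $f$ is $z$-superstable with respect to $L$.
   Context: Vector inequalities are entrywise. A vector $f\in\mathbb{Z}^n$ with $f\ge0$ is $\chi$-superstable with respect to $L$ if for every $\chi\in\{0,1\}^n$ with $\chi\ne 0$ there exists $i$ with $f_i-(L\chi)_i<0$. A vector $f\in\mathbb{Z}^n$ with $f\ge 0$ is $z$-superstable with respect to $L$ if for every $z\in\mathbb{Z}^n$ with $z\ge0$ and $z\ne0$ there exists $i$ with $f_i-(Lz)_i<0$. *)

(* Defs.v *)
(* Real matrices are modelled over an arbitrary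
   realFieldType R (the statement is purely order-algebraic). *)
From HB Require Import structures.
From mathcomp Require Import all_boot all_order all_algebra.
Set Implicit Arguments. Unset Strict Implicit. Unset Printing Implicit Defensive.
Import Order.TTheory GRing.Theory Num.Theory.
Local Open Scope ring_scope.

Definition intvec (R : realFieldType) (n : nat) (v : 'cV[int]_n) : 'cV[R]_n :=
  map_mx (fun z : int => z%:~R) v.

Definition offdiag_nonpos (R : realFieldType) (n : nat) (L : 'M[R]_n) : Prop :=
  forall i j : 'I_n, i != j -> L i j <= 0.

Definition rowsum_nonneg (R : realFieldType) (n : nat) (L : 'M[R]_n) : Prop :=
  forall i : 'I_n, 0 <= \sum_(j < n) L i j.

Definition nonneg_vec (n : nat) (f : 'cV[int]_n) : Prop :=
  forall i : 'I_n, 0 <= f i 0.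

Definition chi_superstable (R : realFieldType) (n : nat) (L : 'M[R]_n)
  (f : 'cV[int]_n) : Prop :=
  nonneg_vec f /\
  forall chi : 'cV[int]_n,
    (forall i, chi i 0 = 0 \/ chi i 0 = 1) -> chi != 0 ->
    exists i : 'I_n, (f i 0)%:~R - (L *m intvec R chi) i 0 < 0.

Definition z_superstable (R : realFieldType) (n : nat) (L : 'M[R]_n)
  (f : 'cV[int]_n) : Prop :=
  nonneg_vec f /\
  forall z : 'cV[int]_n,
    nonneg_vec z -> z != 0 ->
    exists i : 'I_n, (f i 0)%:~R - (L *m intvec R z) i 0 < 0.

(* Main.v *)
Require Import Defs.
From HB Require Import structures.
From mathcomp Require Import all_boot all_order all_algebra.
Import Order.TTheory GRing.Theory Num.Theory.
Local Open Scope ring_scope.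

Lemma key (R : realFieldType) (n : nat) (L : 'M[R]_n) (w : 'I_n -> R) (i : 'I_n) :
  offdiag_nonpos L -> rowsum_nonneg L -> 0 <= w i -> (forall j, w j <= w i) ->
  0 <= \sum_j L i j * w j.
Proof.
move=> Hoff Hrow Hwi Hmax.
apply: (le_trans (y := \sum_j L i j * w i)).
  by rewrite -mulr_suml mulr_ge0 // Hrow.
apply: ler_sum => j _.
have [->|ne] := eqVneq i j; first by [].
by rewrite ler_wnM2l // Hoff.
Qed.

Theorem mainTheorem4 (R : realFieldType) (n : nat) (L : 'M[R]_n)
  (f : 'cV[int]_n) :
  offdiag_nonpos L -> rowsum_nonneg L -> nonneg_vec f ->
  chi_superstable L f -> z_superstable L f.
Proof.
move=> Hoff Hrow Hf [_ Hchi]; split => // z Hz znz.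
have [/existsP [i0 Hi0]|] := boolP [exists i, z i 0 != 0]; last first.
  move=> /existsPn H; case/negP: znz; apply/eqP/matrixP => i j.
  by rewrite ord1 mxE; apply/eqP; move: (H i); rewrite negbK.
case: (@arg_maxnP _ i0 predT (fun i => absz (z i 0)) isT) => k _ Hk.
set m := absz (z k 0).
have zE : forall j, z j 0 = (absz (z j 0))%:Z by move=> j; rewrite gez0_abs // Hz.
have m1 : (1 <= m)%N.
  apply: leq_trans (Hk i0 isT); rewrite lt0n; apply: contra Hi0.
  by move=> /eqP h; rewrite zE h.
pose chi : 'cV[int]_n := \col_i (if absz (z i 0) == m then 1 else 0).
have chiE : forall j, chi j 0 = (if absz (z j 0) == m then 1 else 0) by move=> j; rewrite mxE.
have c01 : forall j, chi j 0 = 0 \/ chi j 0 = 1.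
  by move=> j; rewrite chiE; case: ifP; auto.
have cnz : chi != 0.
  apply/negP => /eqP/matrixP/(_ k 0); rewrite chiE eqxx mxE => /eqP.
  by rewrite oner_eq0.
have [i Hi] := Hchi chi c01 cnz.
exists i.
have E : forall v : 'cV[int]_n, (L *m intvec R v) i 0 = \sum_j L i j * (v j 0)%:~R.
  by move=> v; rewrite mxE; apply: eq_bigr => j _; rewrite mxE.
move: Hi; rewrite !E.
have [Si|nSi] := eqVneq (absz (z i 0)) m.
- move=> H; apply: le_lt_trans _ H; rewrite lerD2l lerN2 -subr_ge0.
  rewrite -sumrB.
  under eq_bigr do rewrite -mulrBr.
  apply: (@key R n L (fun j => (z j 0)%:~R - (chi j 0)%:~R) i) => //.
  + rewrite chiE Si eqxx zE Si subr_ge0 ler_int.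
    by rewrite lez_nat.
  + move=> j; rewrite !chiE Si eqxx -!intrB ler_int (zE i) Si (zE j).
    rewrite absz_nat; case: ifP => [/eqP -> //|/negbT ne].
    rewrite subr0 -(@lerD2r _ 1) subrK lezD1 ltz_nat ltn_neqAle ne.
    exact: Hk.
- move=> H; exfalso; move: H; apply/negP; rewrite -leNgt subr_ge0.
  apply: (le_trans (y := 0)); last by rewrite ler0z Hf.
  apply: sumr_le0 => j _; rewrite chiE.
  case: ifP => [/eqP Sj|]; last by rewrite mulr0.
  rewrite mulr1 Hoff //; apply: contra nSi => /eqP ->; by rewrite Sj.
Qed.
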